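(* Let $X_0=0$ and $X_n=\sum_{j=1}^{X_{n-1}}\xi_{n,j}+\varepsilon_n$ for $n\ge 1$, where $\{\xi_{n,j},\varepsilon_n : n,j\in\mathbb N\}$ are independent nonnegative integer-valued random variables and, for each $n$, the $\xi_{n,j}$, $j\in\mathbb N$, are identically distributed. Let $G_n(x)=\mathbb E x^{\xi_{n,1}}$, $H_n(x)=\mathbb E x^{\varepsilon_n}$, $\rho_n=G_n'(1)$, and $m_{n,k}=H_n^{(k)}(1)=\mathbb E[\varepsilon_n(\varepsilon_n-1)\cdots(\varepsilon_n-k+1)]$, assumed finite for $k=1,2$, with $G_n''(1)<\infty$. Assume (i) $\rho_n<1$ for all $n$, $\lim_{n\to\infty}\rho_n=1$, $\sum_{n=1}^\infty(1-\rho_n)=\infty$, and $\lim_{n\to\infty}G_n''(1)/(1-\rho_n)=0$; (ii) $\lim_{n\to\infty} m_{n,1}/(1-\rho_n)=\lambda$ and $\lim_{n\to\infty} m_{n,2}/(1-\rho_n)=0$. Then $X_n$ converges in distribution to $\mathrm{Poisson}(\lambda)$.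
   Context: $\mathrm{Poisson}(0)$ denotes the point mass at $0$. *)

(* Defs.v *)
(* classical reals. Laws of N-valued random variables are
   represented by probability mass functions nat -> R. *)
From Stdlib Require Import Reals Lra Lia Arith Factorial.
Open Scope R_scope.

Definition is_pmf (f : nat -> R) : Prop :=
  (forall j, 0 <= f j) /\ infinite_sum f 1.

Definition delta0 (k : nat) : R := if Nat.eqb k 0 then 1 else 0.

Definition conv (f g : nat -> R) (k : nat) : R :=
  sum_f_R0 (fun j => f j * g (k - j)%nat) k.

Fixpoint convpow (f : nat -> R) (i : nat) : nat -> R :=
  match i with
  | O => delta0
  | S i' => conv f (convpow f i')
  end.

(* Poisson(lambda) pmf; with 0^0 = 1 this is the point mass at 0 for lambda = 0 *)
Definition poisson_pmf (lam : R) (j : nat) : R :=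
  exp (- lam) * lam ^ j / INR (fact j).

(* Main.v *)
Require Import Defs.
From Stdlib Require Import Reals Lra Lia Factorial Arith.
From Coquelicot Require Import Coquelicot.
Open Scope R_scope.
Implicit Types (a b : nat -> R) (l la lb A B C M : R).

Lemma ser_lim a l : is_series a l -> is_lim_seq (sum_f_R0 a) (Finite l).
Proof. intro H. apply is_lim_seq_Reals. apply is_series_Reals in H. exact H. Qed.
Lemma lim_ser a l : is_lim_seq (sum_f_R0 a) (Finite l) -> is_series a l.
Proof. intro H. apply is_series_Reals. apply is_lim_seq_Reals. exact H. Qed.

Lemma ser_scal_l c a l : is_series a l -> is_series (fun n => c * a n) (c * l).
Proof. intro H. exact (is_series_scal_l c a l H). Qed.
Lemma ser_scal_r c a l : is_series a l -> is_series (fun n => a n * c) (l * c).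
Proof. apply is_series_scal_r. Qed.
Lemma ser_plus a b la lb : is_series a la -> is_series b lb ->
  is_series (fun n => a n + b n) (la + lb).
Proof. intros. exact (is_series_plus a b la lb H H0). Qed.
Lemma ser_minus a b la lb : is_series a la -> is_series b lb ->
  is_series (fun n => a n - b n) (la - lb).
Proof. intros. exact (is_series_minus a b la lb H H0). Qed.
Lemma ser_ext (a b : nat -> R) (l : R) : (forall n, a n = b n) -> is_series a l -> is_series b l.
Proof. apply is_series_ext. Qed.
Lemma ser_uniq a (l1 l2 : R) : is_series a l1 -> is_series a l2 -> l1 = l2.
Proof. intros H1 H2. rewrite <- (is_series_unique a l1 H1). apply is_series_unique; auto. Qed.

Lemma ser_le a b A B : (forall n, a n <= b n) -> is_series a A -> is_series b B -> A <= B.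
Proof.
  intros Hab HA HB. apply ser_lim in HA. apply ser_lim in HB.
  assert (H := is_lim_seq_le _ _ _ _ (fun n => sum_Rle a b n (fun i _ => Hab i)) HA HB).
  exact H.
Qed.

Lemma ser_nonneg a A : (forall n, 0 <= a n) -> is_series a A -> 0 <= A.
Proof.
  intros Ha HA. apply (ser_le (fun _ => 0) a); auto.
  apply lim_ser. apply is_lim_seq_ext with (fun _ => 0).
  intro n; induction n; simpl; lra. apply is_lim_seq_const.
Qed.

Lemma partial_le a A N : (forall n, 0 <= a n) -> is_series a A -> sum_f_R0 a N <= A.
Proof.
  intros Ha HA. apply ser_lim in HA.
  assert (Hev : eventually (fun n => sum_f_R0 a N <= sum_f_R0 a n)).
  { exists N. intros n Hn. induction Hn. lra. simpl. specialize (Ha (S m)). lra. }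
  assert (H := is_lim_seq_le_loc (fun _ => sum_f_R0 a N) (sum_f_R0 a) _ _
     Hev (is_lim_seq_const _) HA).
  exact H.
Qed.

Lemma ser_bounded a M : (forall n, 0 <= a n) -> (forall N, sum_f_R0 a N <= M) ->
  exists A, is_series a A /\ A <= M.
Proof.
  intros Ha HM.
  destruct (ex_finite_lim_seq_incr (sum_f_R0 a) M) as [l Hl].
  intro n; simpl; specialize (Ha (S n)); lra. auto.
  exists l. split. apply lim_ser; auto.
  assert (H := is_lim_seq_le _ _ _ _ HM Hl (is_lim_seq_const M)). exact H.
Qed.

Lemma ser_sum (a : nat -> nat -> R) (b : nat -> R) K :
  (forall k, is_series (fun i => a i k) (b k)) ->
  is_series (fun i => sum_f_R0 (a i) K) (sum_f_R0 b K).
Proof.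
  intro H. induction K; simpl. apply H.
  apply ser_plus; auto.
Qed.

Lemma fubini (a : nat -> nat -> R) (b c : nat -> R) B :
  (forall i k, 0 <= a i k) ->
  (forall i, is_series (fun k => a i k) (b i)) ->
  (forall k, is_series (fun i => a i k) (c k)) ->
  is_series b B -> is_series c B.
Proof.
  intros Ha Hb Hc HB.
  assert (Hb0 : forall i, 0 <= b i) by (intro i; apply (ser_nonneg (fun k => a i k)); [auto | apply Hb]).
  assert (Hc0 : forall k, 0 <= c k) by (intro k; apply (ser_nonneg (fun i => a i k)); [auto | apply Hc]).
  destruct (ser_bounded c B Hc0) as [C [HC HCB]].
  { intro K. apply (ser_le (fun i => sum_f_R0 (a i) K) b).
    intro i. apply partial_le; auto. apply ser_sum. auto. auto. }
  assert (B <= C).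
  { apply ser_lim in HB.
    assert (HI : forall I, sum_f_R0 b I <= C).
    { intro I. apply (ser_le (fun k => sum_f_R0 (fun i => a i k) I) c).
      intro k. apply partial_le; auto.
      apply ser_sum. intro i. apply Hb. auto. }
    assert (H := is_lim_seq_le (sum_f_R0 b) (fun _ => C) _ _ HI HB (is_lim_seq_const C)).
    exact H. }
  replace B with C by lra. auto.
Qed.

Lemma pow_le1 s n : 0 <= s <= 1 -> s ^ n <= 1.
Proof. intro H. rewrite <- (pow1 n). apply pow_incr; lra. Qed.

Definition pmf' a := (forall n, 0 <= a n) /\ is_series a 1.

Lemma pmf_of a : is_pmf a -> pmf' a.
Proof. intros [H1 H2]. split; auto. apply is_series_Reals; auto. Qed.

Lemma pgf_ex a s : pmf' a -> 0 <= s <= 1 -> ex_series (fun j => a j * s ^ j).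
Proof.
  intros [Ha H1] Hs. apply (@ex_series_le R_AbsRing R_CompleteNormedModule _ a).
  intro n. change (norm (a n * s ^ n)) with (Rabs (a n * s ^ n)).
  rewrite Rabs_pos_eq. 
  assert (0 <= s ^ n <= 1). { split. apply pow_le; lra. apply pow_le1; lra. }
  specialize (Ha n). nra.
  apply Rmult_le_pos; auto. apply pow_le; lra.
  exists 1; auto.
Qed.

Definition pgf a s := Series (fun j => a j * s ^ j).

Lemma pgf_is a s : pmf' a -> 0 <= s <= 1 -> is_series (fun j => a j * s ^ j) (pgf a s).
Proof. intros. apply Series_correct. apply pgf_ex; auto. Qed.

Lemma pgf_bnd a s : pmf' a -> 0 <= s <= 1 -> 0 <= pgf a s <= 1.
Proof.
  intros Hp Hs. assert (H := pgf_is a s Hp Hs). destruct Hp as [Ha H1]. split.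
  apply (ser_nonneg _ _ (fun n => Rmult_le_pos _ _ (Ha n) (pow_le _ n (proj1 Hs))) H).
  eapply (ser_le _ a); [|exact H|exact H1].
  intro n. assert (s ^ n <= 1) by (apply pow_le1; lra). specialize (Ha n).
  assert (0 <= s ^ n) by (apply pow_le; lra). nra.
Qed.

Lemma pgf_1 a : pmf' a -> pgf a 1 = 1.
Proof.
  intros Hp. apply (ser_uniq (fun j => a j * 1 ^ j)). apply pgf_is; auto; lra.
  apply (ser_ext a). intro n. rewrite pow1; ring. apply Hp.
Qed.

Lemma conv_nonneg a b k : (forall n, 0 <= a n) -> (forall n, 0 <= b n) -> 0 <= conv a b k.
Proof. intros. unfold conv. apply cond_pos_sum. intro. apply Rmult_le_pos; auto. Qed.

Lemma conv_ser a b s A B : (forall n, 0 <= a n) -> (forall n, 0 <= b n) -> 0 <= s ->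
  is_series (fun j => a j * s ^ j) A -> is_series (fun j => b j * s ^ j) B ->
  is_series (fun k => conv a b k * s ^ k) (A * B).
Proof.
  intros Ha Hb Hs HA HB.
  assert (H := is_series_mult_pos _ _ _ _ HA HB
     (fun n => Rmult_le_pos _ _ (Ha n) (pow_le _ n Hs))
     (fun n => Rmult_le_pos _ _ (Hb n) (pow_le _ n Hs))).
  eapply ser_ext; [|exact H].
  intro k. unfold conv. symmetry. rewrite Rmult_comm, scal_sum. apply sum_eq.
  intros i Hi. replace (s ^ k) with (s ^ i * s ^ (k - i)). ring.
  rewrite <- pow_add. f_equal. lia.
Qed.

Lemma delta0_ser s : is_series (fun k => delta0 k * s ^ k) 1.
Proof.
  apply lim_ser. apply is_lim_seq_ext with (fun _ => 1). 2: apply is_lim_seq_const.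
  intro n; induction n; simpl. unfold delta0; simpl; ring.
  rewrite <- IHn. unfold delta0; simpl; ring.
Qed.

Lemma delta0_nonneg k : 0 <= delta0 k.
Proof. unfold delta0; destruct (Nat.eqb k 0); lra. Qed.

Lemma convpow_ser a s G i : (forall n, 0 <= a n) -> 0 <= s ->
  is_series (fun j => a j * s ^ j) G ->
  (forall k, 0 <= convpow a i k) /\ is_series (fun k => convpow a i k * s ^ k) (G ^ i).
Proof.
  intros Ha Hs HG. induction i as [|i [IH1 IH2]]; simpl.
  split. apply delta0_nonneg. apply delta0_ser.
  split. intro k. apply conv_nonneg; auto.
  apply conv_ser; auto.
Qed.

Lemma taylor u j : 0 <= u <= 1 ->
  0 <= (1 - u) ^ j - 1 + INR j * u <= INR j * (INR j - 1) / 2 * u ^ 2.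
Proof.
  intro Hu. induction j. simpl. lra.
  rewrite S_INR. simpl pow.
  set (x := (1 - u) ^ j) in *. assert (0 <= INR j) by apply pos_INR.
  assert (H1 : (1 - u) * x - 1 + (INR j + 1) * u
     = ((x - 1 + INR j * u) * (1 - u) + INR j * u ^ 2)) by ring.
  rewrite H1. split.
  assert (0 <= INR j * u ^ 2) by (apply Rmult_le_pos; nra). nra.
  assert (0 <= (x - 1 + INR j * u) * u) by nra. nra.
Qed.

Lemma moment a s M1 M2 : pmf' a -> 0 <= s <= 1 ->
  is_series (fun j => INR j * a j) M1 ->
  is_series (fun j => INR j * (INR j - 1) * a j) M2 ->
  0 <= pgf a s - 1 + M1 * (1 - s) <= M2 * ((1 - s) ^ 2 / 2).
Proof.
  intros Hp Hs H1 H2.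
  assert (HA := pgf_is a s Hp Hs). destruct Hp as [Ha Hs1].
  assert (HS := ser_plus _ _ _ _ (ser_minus _ _ _ _ HA Hs1) (ser_scal_r (1 - s) _ _ H1)).
  simpl in HS.
  assert (Hu : 0 <= 1 - s <= 1) by lra.
  split.
  eapply ser_nonneg; [|exact HS].
  2: eapply ser_le; [|exact HS|exact (ser_scal_r ((1 - s) ^ 2 / 2) _ _ H2)].
  all: intro n.
  - destruct (taylor (1 - s) n Hu) as [T1 T2]. replace (1 - (1 - s)) with s in * by ring.
    specialize (Ha n). 
    replace (a n * s ^ n - a n + INR n * a n * (1 - s)) with (a n * (s ^ n - 1 + INR n * (1 - s))) by ring.
    apply Rmult_le_pos; auto.
  - destruct (taylor (1 - s) n Hu) as [T1 T2]. replace (1 - (1 - s)) with s in * by ring.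
    specialize (Ha n).
    replace (a n * s ^ n - a n + INR n * a n * (1 - s)) with (a n * (s ^ n - 1 + INR n * (1 - s))) by ring.
    replace (INR n * (INR n - 1) * a n * ((1 - s) ^ 2 / 2)) with (a n * (INR n * (INR n - 1) / 2 * (1 - s) ^ 2)) by field.
    apply Rmult_le_compat_l; auto.
Qed.

Lemma recstep (X P Q Y : nat -> R) :
  pmf' X -> pmf' P -> pmf' Q ->
  (forall k, is_series (fun i => X i * conv (convpow P i) Q k) (Y k)) ->
  pmf' Y /\ forall s, 0 <= s <= 1 -> pgf Y s = pgf X (pgf P s) * pgf Q s.
Proof.
  intros HX HP HQ HY.
  assert (Hcp : forall i k, 0 <= convpow P i k).
  { intros i k. assert (H1 : 0 <= 1 <= 1) by lra.
    exact (proj1 (convpow_ser P 1 _ i (proj1 HP) (proj1 H1) (pgf_is P 1 HP H1)) k). }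
  assert (Hcv : forall i k, 0 <= conv (convpow P i) Q k).
  { intros. apply conv_nonneg; auto. apply HQ. }
  assert (HY0 : forall k, 0 <= Y k).
  { intro k. eapply ser_nonneg; [|exact (HY k)]. intro i. simpl.
    apply Rmult_le_pos; auto. apply HX. }
  assert (Main : forall s, 0 <= s <= 1 ->
     is_series (fun k => Y k * s ^ k) (pgf X (pgf P s) * pgf Q s)).
  { intros s Hs.
    set (t := pgf P s). set (h := pgf Q s).
    assert (Ht : 0 <= t <= 1) by (apply pgf_bnd; auto).
    apply (fubini (fun i k => X i * conv (convpow P i) Q k * s ^ k)
                  (fun i => X i * (t ^ i * h))).
    - intros i k. apply Rmult_le_pos. apply Rmult_le_pos; auto. apply HX. apply pow_le; lra.
    - intro i.
      destruct (convpow_ser P s t i (proj1 HP) (proj1 Hs) (pgf_is P s HP Hs)) as [_ Hc].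
      assert (H := ser_scal_l (X i) _ _ (conv_ser _ _ s _ _ (Hcp i) (proj1 HQ) (proj1 Hs) 
                 Hc (pgf_is Q s HQ Hs))).
      fold t h in H. eapply ser_ext; [|exact H]. intro k; simpl; ring.
    - intro k. assert (H := ser_scal_r (s ^ k) _ _ (HY k)). exact H.
    - assert (H := ser_scal_r h _ _ (pgf_is X t HX Ht)).
      eapply ser_ext; [|exact H]. intro k; simpl; ring. }
  assert (HP1 := pgf_1 P HP). assert (HQ1 := pgf_1 Q HQ). assert (HX1 := pgf_1 X HX).
  assert (HYp : pmf' Y).
  { split; auto. assert (H := Main 1 ltac:(lra)). rewrite HP1, HQ1, HX1 in H.
    replace 1 with (1 * 1) by ring. eapply ser_ext; [|exact H]. intro k. simpl. rewrite pow1; ring. }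
  split; auto.
  intros s Hs. apply (ser_uniq (fun k => Y k * s ^ k)). apply pgf_is; auto. apply Main; auto.
Qed.

Lemma exp_mono x y : x <= y -> exp x <= exp y.
Proof. intro H. destruct (Req_dec x y). subst; lra. left; apply exp_increasing; lra. Qed.

Definition Bnd lam r m1 m2 g2 :=
  let A0 := lam * (1 - r) + lam * g2 / 2 in
  A0 * exp A0 * m1 + A0 ^ 2 * exp A0 + lam * g2 / 2 + Rabs (lam * (1 - r) - m1) + m2 / 2.

Lemma est lam r m1 m2 g2 u t h :
  0 <= lam -> 0 <= r < 1 -> 0 <= m1 -> 0 <= m2 -> 0 <= g2 -> 0 <= u <= 1 ->
  0 <= t - 1 + r * u <= g2 * (u ^ 2 / 2) ->
  0 <= h - 1 + m1 * u <= m2 * (u ^ 2 / 2) -> 0 <= h <= 1 ->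
  Rabs (exp (- lam * (1 - t)) * h - exp (- lam * u)) <= Bnd lam r m1 m2 g2 * u.
Proof.
  intros Hl Hr Hm1 Hm2 Hg Hu Ht Hh Hh1.
  unfold Bnd. set (A0 := lam * (1 - r) + lam * g2 / 2).
  set (a := lam * (t - 1 + u)).
  assert (HA0 : 0 <= A0) by (unfold A0; nra).
  assert (Hu2 : u ^ 2 <= u) by nra.
  assert (Ht1 : 0 <= t - 1 + u) by nra.
  assert (Ha0 : 0 <= a) by (unfold a; apply Rmult_le_pos; lra).
  assert (Ha1 : a <= A0 * u).
  { unfold a, A0. assert (g2 * (u ^ 2 / 2) <= g2 / 2 * u) by (assert (0 <= g2 * (u - u ^ 2)) by (apply Rmult_le_pos; lra); nra).
    assert (Hq : t - 1 + u <= (1 - r) * u + g2 / 2 * u) by nra.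
    assert (lam * (t - 1 + u) <= lam * ((1 - r) * u + g2 / 2 * u)) by (apply Rmult_le_compat_l; lra). nra. }
  set (E := exp a).
  assert (HE1 : 1 + a <= E) by apply exp_ineq1_le.
  assert (HE2 : E - 1 <= a * E).
  { assert (H := exp_ineq1_le (- a)). assert (exp (- a) * E = 1).
    unfold E. rewrite <- exp_plus. replace (- a + a) with 0 by ring. apply exp_0.
    assert (0 < E) by apply exp_pos. nra. }
  assert (HE3 : E <= exp A0).
  { apply exp_mono. nra. }
  assert (Hexp : exp (- lam * (1 - t)) = exp (- lam * u) * E).
  { unfold E, a. rewrite <- exp_plus. f_equal. ring. }
  rewrite Hexp.
  set (w := exp (- lam * u)).
  assert (Hw : 0 < w <= 1).
  { split. apply exp_pos. unfold w. rewrite <- exp_0. apply exp_mono. nra. }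
  replace (w * E * h - w) with (w * (E * h - 1)) by ring.
  rewrite Rabs_mult, (Rabs_pos_eq w) by lra.
  assert (Hdec : E * h - 1 = (E - 1) * (h - 1) + (E - 1 - a) + (a - m1 * u) + (h - 1 + m1 * u)) by ring.
  assert (HeA : 0 <= exp A0) by (left; apply exp_pos).
  assert (T1 : Rabs ((E - 1) * (h - 1)) <= A0 * exp A0 * m1 * u).
  { rewrite Rabs_mult, Rabs_pos_eq, Rabs_minus_sym, Rabs_pos_eq by lra.
    assert (1 - h <= m1 * u) by nra.
    assert (a * E <= A0 * u * exp A0).
    { apply Rmult_le_compat; lra. }
    assert (E - 1 <= A0 * exp A0 * u) by nra.
    assert (0 <= E - 1) by lra.
    assert ((E - 1) * (1 - h) <= (A0 * exp A0 * u) * (m1 * u)).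
    { apply Rmult_le_compat; lra. }
    assert (0 <= A0 * exp A0 * m1) by (apply Rmult_le_pos; [apply Rmult_le_pos|]; lra).
    nra. }
  assert (T2 : Rabs (E - 1 - a) <= A0 ^ 2 * exp A0 * u).
  { rewrite Rabs_pos_eq by lra.
    assert (E - 1 - a <= a * (E - 1)) by nra.
    assert (a * (E - 1) <= a * (a * E)) by (apply Rmult_le_compat_l; lra).
    assert (a * E <= A0 * u * exp A0) by (apply Rmult_le_compat; lra).
    assert (a * (a * E) <= (A0 * u) * (A0 * u * exp A0)) by (apply Rmult_le_compat; nra).
    assert (0 <= A0 ^ 2 * exp A0) by (apply Rmult_le_pos; nra).
    nra. }
  assert (T3 : Rabs (a - m1 * u) <= (lam * g2 / 2 + Rabs (lam * (1 - r) - m1)) * u).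
  { replace (a - m1 * u) with (lam * (t - 1 + r * u) + (lam * (1 - r) - m1) * u) by (unfold a; ring).
    eapply Rle_trans. apply Rabs_triang.
    rewrite Rabs_mult, (Rabs_pos_eq lam), Rabs_pos_eq by lra.
    rewrite Rabs_mult, (Rabs_pos_eq u) by lra.
    assert (lam * (t - 1 + r * u) <= lam * (g2 * (u ^ 2 / 2))) by (apply Rmult_le_compat_l; lra).
    assert (lam * g2 * u ^ 2 <= lam * g2 * u) by (apply Rmult_le_compat_l; nra).
    nra. }
  assert (T4 : Rabs (h - 1 + m1 * u) <= m2 / 2 * u).
  { rewrite Rabs_pos_eq by lra. nra. }
  assert (Habs : Rabs (E * h - 1) <= (A0 * exp A0 * m1 + A0 ^ 2 * exp A0 + lam * g2 / 2 + Rabs (lam * (1 - r) - m1) + m2 / 2) * u).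
  { rewrite Hdec.
    eapply Rle_trans. apply Rabs_triang.
    eapply Rle_trans. apply Rplus_le_compat_r. apply Rabs_triang.
    eapply Rle_trans. apply Rplus_le_compat_r. apply Rplus_le_compat_r. apply Rabs_triang.
    lra. }
  assert (0 <= Rabs (E * h - 1)) by apply Rabs_pos.
  nra.
Qed.

Lemma Bnd_nonneg lam r m1 m2 g2 : 0 <= lam -> r < 1 -> 0 <= m1 -> 0 <= m2 -> 0 <= g2 ->
  0 <= Bnd lam r m1 m2 g2.
Proof.
  intros. unfold Bnd. set (A0 := lam * (1 - r) + lam * g2 / 2).
  assert (0 <= A0) by (unfold A0; assert (0 <= lam * (1 - r)) by (apply Rmult_le_pos; lra);
     assert (0 <= lam * g2) by (apply Rmult_le_pos; lra); lra).
  assert (0 < exp A0) by apply exp_pos.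
  assert (0 <= A0 * exp A0 * m1) by (apply Rmult_le_pos; [apply Rmult_le_pos|]; lra).
  assert (0 <= A0 ^ 2 * exp A0) by (apply Rmult_le_pos; [apply pow_le|]; lra).
  assert (0 <= lam * g2) by (apply Rmult_le_pos; lra).
  assert (0 <= Rabs (lam * (1 - r) - m1)) by apply Rabs_pos.
  lra.
Qed.

Fixpoint Dseq (rho Bn : nat -> R) (D0 : R) (n : nat) : R :=
  match n with
  | O => D0
  | S m => rho (S m) * Dseq rho Bn D0 m + Bn (S m)
  end.

Lemma Dseq_nonneg rho Bn D0 n : (forall n, 0 <= rho (S n)) -> (forall n, 0 <= Bn (S n)) ->
  0 <= D0 -> 0 <= Dseq rho Bn D0 n.
Proof.
  intros H1 H2 H3. induction n; simpl; auto.
  specialize (H1 n); specialize (H2 n). nra.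
Qed.

Lemma Dseq_cv rho Bn D0 :
  (forall n, 0 <= rho (S n) < 1) -> (forall n, 0 <= Bn (S n)) -> 0 <= D0 ->
  Un_cv (fun n => Bn (S n) / (1 - rho (S n))) 0 ->
  cv_infty (fun N => sum_f_R0 (fun n => 1 - rho (S n)) N) ->
  Un_cv (Dseq rho Bn D0) 0.
Proof.
  intros Hr HB HD Heps Hinf eta Heta.
  set (P := fun N => sum_f_R0 (fun n => 1 - rho (S n)) N).
  destruct (Heps (eta / 2)) as [N HN]. lra.
  set (Y := Rmax (Dseq rho Bn D0 (S N) - eta / 2) 0).
  assert (HY : 0 <= Y) by apply Rmax_r.
  assert (Claim : forall k, Dseq rho Bn D0 (S (N + k)) - eta / 2 <= exp (- (P (N + k)%nat - P N)) * Y).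
  { induction k.
    - rewrite Nat.add_0_r. replace (- (P N - P N)) with 0 by ring.
      rewrite exp_0. unfold Y. assert (H := Rmax_l (Dseq rho Bn D0 (S N) - eta / 2) 0). lra.
    - replace (N + S k)%nat with (S (N + k)) by lia.
      change (Dseq rho Bn D0 (S (S (N + k)))) with
        (rho (S (S (N + k))) * Dseq rho Bn D0 (S (N + k)) + Bn (S (S (N + k)))).
      change (P (S (N + k))%nat) with (P (N + k)%nat + (1 - rho (S (S (N + k))))).
      set (r := rho (S (S (N + k)))) in *. set (D := Dseq rho Bn D0 (S (N + k))) in *.
      assert (Hr1 := Hr (S (N + k))). fold r in Hr1.
      assert (He := HN (S (N + k)) ltac:(lia)). unfold Rdist in He.
      rewrite Rminus_0_r in He. fold r in He.
      assert (Hb : Bn (S (S (N + k))) <= (1 - r) * (eta / 2)).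
      { assert (H := Rle_abs (Bn (S (S (N + k))) / (1 - r))).
        assert (Bn (S (S (N + k))) / (1 - r) < eta / 2) by lra.
        apply Rmult_lt_compat_r with (r := 1 - r) in H0; [|lra].
        field_simplify in H0; lra. }
      assert (Hexp : exp (- (P (N + k)%nat + (1 - r) - P N)) = exp (- (1 - r)) * exp (- (P (N + k)%nat - P N))).
      { rewrite <- exp_plus. f_equal. ring. }
      rewrite Hexp.
      assert (Hre : r <= exp (- (1 - r))) by (assert (H := exp_ineq1_le (- (1 - r))); lra).
      set (Z := exp (- (P (N + k)%nat - P N)) * Y) in *.
      assert (HZ : 0 <= Z) by (unfold Z; apply Rmult_le_pos; [left; apply exp_pos | auto]).
      assert (r * (D - eta / 2) <= r * Z) by (apply Rmult_le_compat_l; lra).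
      assert (r * Z <= exp (- (1 - r)) * Z) by (apply Rmult_le_compat_r; lra).
      rewrite Rmult_assoc. fold Z. lra. }
  destruct (Hinf (P N + 2 * Y / eta)) as [N0 HN0].
  exists (S (N + N0)). intros n Hn.
  destruct n as [|n]. lia.
  assert (Hk : n = (N + (n - N))%nat) by lia.
  assert (HC := Claim (n - N)%nat). rewrite <- Hk in HC.
  assert (HP : P N + 2 * Y / eta < P n) by (apply HN0; lia).
  set (x := P n - P N) in *.
  assert (Hx : 2 * Y / eta < x) by (unfold x; lra).
  assert (Hx0 : 0 <= x).
  { assert (0 <= 2 * Y / eta) by (apply Rmult_le_pos; [lra | left; apply Rinv_0_lt_compat; lra]). lra. }
  assert (Hex : exp (- x) * (1 + x) <= 1).
  { assert (H := exp_ineq1_le x). assert (exp (- x) * exp x = 1).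
    rewrite <- exp_plus. replace (- x + x) with 0 by ring. apply exp_0.
    assert (0 < exp (- x)) by apply exp_pos. nra. }
  assert (HexY : exp (- x) * Y < eta / 2).
  { assert (Y < eta / 2 * (1 + x)).
    { assert (2 * Y < eta * x).
      { apply Rmult_lt_compat_r with (r := eta) in Hx; [|lra].
        field_simplify in Hx; lra. }
      nra. }
    assert (0 < exp (- x)) by apply exp_pos.
    assert (exp (- x) * Y <= exp (- x) * (eta / 2 * (1 + x))).
    { apply Rmult_le_compat_l; lra. }
    nra. }
  assert (0 <= Dseq rho Bn D0 (S n)).
  { apply Dseq_nonneg; auto. intro m; apply Hr. }
  unfold Rdist. rewrite Rminus_0_r, Rabs_pos_eq by lra. lra.
Qed.

Lemma poisson_ser lam s : 0 <= lam ->
  is_series (fun j => poisson_pmf lam j * s ^ j) (exp (- lam * (1 - s))).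
Proof.
  intro Hl. assert (H := is_exp_Reals (lam * s)). unfold is_pseries in H.
  assert (H2 := ser_scal_l (exp (- lam)) _ _ H).
  replace (- lam * (1 - s)) with (- lam + lam * s) by ring. rewrite exp_plus.
  eapply ser_ext; [|exact H2]. intro k. simpl.
  change (scal (pow_n (lam * s) k) (/ INR (Factorial.fact k))) with (pow_n (lam * s) k * / INR (fact k)).
  rewrite pow_n_pow, Rpow_mult_distr. unfold poisson_pmf. unfold Rdiv. ring.
Qed.

Lemma poisson_pmf' lam : 0 <= lam -> pmf' (poisson_pmf lam).
Proof.
  intro Hl. split.
  - intro n. unfold poisson_pmf. apply Rmult_le_pos. apply Rmult_le_pos.
    left; apply exp_pos. apply pow_le; auto. left. apply Rinv_0_lt_compat. apply lt_0_INR.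
    apply lt_O_fact.
  - assert (H := poisson_ser lam 1 Hl). replace (- lam * (1 - 1)) with 0 in H by ring.
    rewrite exp_0 in H. eapply ser_ext; [|exact H]. intro; simpl. rewrite pow1; ring.
Qed.

Fixpoint lsum (f : nat -> R) (k : nat) : R :=
  match k with O => 0 | S k' => lsum f k' + f k' end.

Lemma lsum_sum f k : sum_f_R0 f k = lsum f (S k).
Proof. induction k; simpl. ring. simpl in IHk. rewrite IHk. ring. Qed.

Lemma lsum_cv (f : nat -> nat -> R) (g : nat -> R) k :
  (forall j, (j < k)%nat -> Un_cv (fun n => f n j) (g j)) ->
  Un_cv (fun n => lsum (f n) k) (lsum g k).
Proof.
  induction k; intro H; simpl.
  - intros e He. exists O. intros. unfold Rdist. rewrite Rminus_0_r, Rabs_R0. lra.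
  - apply CV_plus. apply IHk. intros; apply H; lia. apply H; lia.
Qed.

Lemma sum_mono (c : nat -> R) N k : (forall n, 0 <= c n) -> (N <= k)%nat ->
  sum_f_R0 c N <= sum_f_R0 c k.
Proof.
  intros Hc Hk. induction Hk. lra. simpl. specialize (Hc (S m)). lra.
Qed.

Lemma tail b s k V : pmf' b -> 0 <= s <= 1 -> is_series (fun j => b j * s ^ j) V ->
  0 <= V - sum_f_R0 (fun j => b j * s ^ j) k <= s ^ (S k).
Proof.
  intros [Hb H1] Hs HV.
  assert (Hc : forall j, 0 <= b j * s ^ j) by (intro j; apply Rmult_le_pos; auto; apply pow_le; lra).
  split. assert (H := partial_le _ _ k Hc HV). lra.
  assert (Hpart : forall N, sum_f_R0 (fun j => b j * s ^ j) N <=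
     sum_f_R0 (fun j => b j * s ^ j) k + s ^ (S k) * sum_f_R0 b N).
  { assert (Hsk : 0 <= s ^ (S k)) by (apply pow_le; lra).
    assert (Hbs : forall N, 0 <= sum_f_R0 b N) by (intro; apply cond_pos_sum; auto).
    induction N.
    - assert (H := sum_mono _ 0 k Hc ltac:(lia)). specialize (Hbs 0%nat). nra.
    - destruct (le_lt_dec (S N) k).
      + assert (H := sum_mono _ (S N) k Hc l). specialize (Hbs (S N)). nra.
      + rewrite !tech5. assert (s ^ S N <= s ^ S k).
        { replace (S N) with (S k + (N - k))%nat by lia. rewrite pow_add.
          assert (s ^ (N - k) <= 1) by (apply pow_le1; lra). nra. }
        specialize (Hb (S N)). nra. }
  apply ser_lim in HV.
  assert (Hb1 : forall N, sum_f_R0 b N <= 1) by (intro; apply partial_le; auto).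
  assert (Hle : forall N, sum_f_R0 (fun j => b j * s ^ j) N <=
     sum_f_R0 (fun j => b j * s ^ j) k + s ^ (S k)).
  { intro N. specialize (Hpart N). specialize (Hb1 N).
    assert (0 <= s ^ S k) by (apply pow_le; lra). nra. }
  assert (H := is_lim_seq_le _ _ _ _ Hle HV (is_lim_seq_const _)). assert (H2 : V <= sum_f_R0 (fun j => b j * s ^ j) k + s ^ (S k)) by exact H. lra.
Qed.

Lemma coef_cv (an : nat -> nat -> R) (a : nat -> R) (Fn : nat -> R -> R) (F : R -> R) :
  (forall n, pmf' (an n)) -> pmf' a ->
  (forall n s, 0 <= s <= 1 -> is_series (fun j => an n j * s ^ j) (Fn n s)) ->
  (forall s, 0 <= s <= 1 -> is_series (fun j => a j * s ^ j) (F s)) ->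
  (forall s, 0 < s < 1 -> Un_cv (fun n => Fn n s) (F s)) ->
  forall k, Un_cv (fun n => an n k) (a k).
Proof.
  intros Han Ha HFn HF Hcv k.
  induction k as [k IH] using (well_founded_induction lt_wf).
  intros eps Heps.
  set (s := Rmin (1 / 2) (eps / 4)).
  assert (Hs : 0 < s <= 1 / 2) by (unfold s; apply Rmin_glb_lt || idtac; 
     split; [apply Rmin_glb_lt; lra | apply Rmin_l]).
  assert (Hs2 : s <= eps / 4) by apply Rmin_r.
  assert (Hsk : 0 < s ^ k) by (apply pow_lt; lra).
  assert (HR : Un_cv (fun n => lsum (fun j => (an n j - a j) * s ^ j) k) (lsum (fun j => (a j - a j) * s ^ j) k)).
  { apply (lsum_cv (fun n j => (an n j - a j) * s ^ j)). intros j Hj.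
    apply (CV_mult (fun n => an n j - a j) (fun _ => s ^ j)).
    apply (CV_minus _ (fun _ => a j)). apply IH; auto.
    intros e He; exists O; intros; unfold Rdist; rewrite Rminus_eq_0, Rabs_R0; lra.
    intros e He; exists O; intros; unfold Rdist; rewrite Rminus_eq_0, Rabs_R0; lra. }
  assert (Hz : lsum (fun j => (a j - a j) * s ^ j) k = 0).
  { clear. induction k; simpl; auto. rewrite IHk. ring. }
  rewrite Hz in HR.
  assert (HF2 := Hcv s ltac:(lra)).
  assert (HD := CV_minus _ _ _ _ HF2 HR). 
  destruct (HD (eps / 2 * s ^ k)) as [N HN]. apply Rmult_lt_0_compat; lra.
  exists N. intros n Hn. specialize (HN n Hn). unfold Rdist in *.
  rewrite Rminus_0_r in HN.
  assert (Hs' : 0 <= s <= 1) by lra.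
  assert (T1 := tail _ s k _ (Han n) Hs' (HFn n s Hs')).
  assert (T2 := tail _ s k _ Ha Hs' (HF s Hs')).
  rewrite lsum_sum in T1, T2. simpl lsum in T1, T2.
  assert (Hl : lsum (fun j => an n j * s ^ j) k - lsum (fun j => a j * s ^ j) k
     = lsum (fun j => (an n j - a j) * s ^ j) k).
  { clear. induction k; simpl. ring. rewrite <- IHk. ring. }
  set (L := lsum (fun j => (an n j - a j) * s ^ j) k) in *.
  assert (Hsk1 : s ^ S k = s * s ^ k) by reflexivity.
  assert (Hmain : Rabs ((an n k - a k) * s ^ k) <= Rabs (Fn n s - L - F s) + 2 * (s * s ^ k)).
  { rewrite <- Hsk1.
    replace ((an n k - a k) * s ^ k) with
      ((Fn n s - L - F s) - ((Fn n s - (lsum (fun j => an n j * s ^ j) k + an n k * s ^ k))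
          - (F s - (lsum (fun j => a j * s ^ j) k + a k * s ^ k)))) by (rewrite <- Hl; ring).
    eapply Rle_trans. apply Rabs_triang_inv2 || apply Rabs_triang. 
    rewrite Rabs_Ropp. apply Rplus_le_compat_l.
    unfold Rminus at 1. eapply Rle_trans. apply Rabs_triang. rewrite Rabs_Ropp.
    rewrite (Rabs_pos_eq (Fn n s - _)) by lra. rewrite (Rabs_pos_eq (F s - _)) by lra. lra. }
  rewrite Rabs_mult, (Rabs_pos_eq (s ^ k)) in Hmain by lra.
  assert (Rabs (an n k - a k) * s ^ k < (eps / 2 + 2 * s) * s ^ k) by nra.
  assert (Rabs (an n k - a k) < eps / 2 + 2 * s).
  { apply Rmult_lt_reg_r with (s ^ k); lra. }
  lra.
Qed.

Lemma cv_ext (u v : nat -> R) l : (forall n, u n = v n) -> Un_cv u l -> Un_cv v l.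
Proof. intros H Hu e He. destruct (Hu e He) as [N HN]. exists N. intros. rewrite <- H. auto. Qed.
Lemma cv_eq (u : nat -> R) l l' : Un_cv u l -> l = l' -> Un_cv u l'.
Proof. intros; subst; auto. Qed.
Lemma cv_const c : Un_cv (fun _ => c) c.
Proof. intros e He. exists O. intros. unfold Rdist. rewrite Rminus_eq_0, Rabs_R0. lra. Qed.
Lemma cv_shift (u : nat -> R) l : Un_cv u l -> Un_cv (fun n => u (S n)) l.
Proof. intros Hu e He. destruct (Hu e He) as [N HN]. exists N. intros. apply HN. lia. Qed.

Lemma Bnd_cv lam (r g2 m1 m2 : nat -> R) : (forall n, r n < 1) -> Un_cv r 1 ->
  Un_cv (fun n => g2 n / (1 - r n)) 0 -> Un_cv (fun n => m1 n / (1 - r n)) lam ->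
  Un_cv (fun n => m2 n / (1 - r n)) 0 ->
  Un_cv (fun n => Bnd lam (r n) (m1 n) (m2 n) (g2 n) / (1 - r n)) 0.
Proof.
  intros Hr Hr1 HG HM1 HM2.
  set (ee := fun n => 1 - r n).
  assert (He : Un_cv ee 0).
  { apply (cv_eq _ (1 - 1)); [|field]. apply CV_minus. apply cv_const. auto. }
  set (G := fun n => g2 n / (1 - r n)) in *.
  set (M1 := fun n => m1 n / (1 - r n)) in *.
  set (M2 := fun n => m2 n / (1 - r n)) in *.
  set (A0 := fun n => lam * ee n + lam * (G n * ee n) / 2).
  assert (HA0 : Un_cv A0 0).
  { apply (cv_eq _ (lam * 0 + lam * (0 * 0) / 2)); [|field].
    unfold A0. apply CV_plus. apply (CV_mult (fun _ => lam)). apply cv_const. auto.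
    apply (cv_ext (fun n => (lam * (G n * ee n)) * / 2)). intro; reflexivity.
    apply (CV_mult _ (fun _ => / 2)). apply (CV_mult (fun _ => lam)). apply cv_const.
    apply CV_mult; auto. apply cv_const. }
  assert (HA0e : Un_cv (fun n => lam + lam * G n / 2) lam).
  { apply (cv_eq _ (lam + lam * 0 * / 2)); [|field].
    apply CV_plus. apply cv_const. apply (CV_mult (fun n => lam * G n) (fun _ => / 2)).
    apply (CV_mult (fun _ => lam)). apply cv_const. auto. apply cv_const. }
  assert (Hexp : Un_cv (fun n => exp (A0 n)) 1).
  { rewrite <- exp_0. apply continuity_seq; auto.
    apply derivable_continuous_pt. apply derivable_pt_exp. }
  assert (Habs : Un_cv (fun n => Rabs (lam - M1 n)) 0).
  { rewrite <- Rabs_R0. apply cv_cvabs. apply (cv_eq _ (lam - lam)); [|field].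
    apply CV_minus; auto. apply cv_const. }
  apply (cv_ext (fun n => A0 n * exp (A0 n) * M1 n + (lam + lam * G n / 2) * A0 n * exp (A0 n)
      + lam * G n / 2 + Rabs (lam - M1 n) + M2 n / 2)).
  { intro n. assert (Hen : 0 < ee n) by (unfold ee; specialize (Hr n); lra).
    unfold Bnd, A0, G, M1, M2. fold (ee n).
    replace (lam * ee n - m1 n) with ((lam - m1 n / ee n) * ee n) by (field; lra).
    rewrite Rabs_mult, (Rabs_pos_eq (ee n)) by lra.
    replace (g2 n / ee n * ee n) with (g2 n) by (field; lra).
    field. lra. }
  apply (cv_eq _ (0 * 1 * lam + lam * 0 * 1 + lam * 0 / 2 + 0 + 0 / 2)); [|field].
  repeat apply CV_plus.
  - repeat apply CV_mult; auto.
  - repeat apply CV_mult; auto.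
  - apply (cv_ext (fun n => lam * G n * / 2)). intro; reflexivity.
    apply (CV_mult _ (fun _ => / 2)). apply (CV_mult (fun _ => lam)). apply cv_const. auto. apply cv_const.
  - auto.
  - apply (cv_ext (fun n => M2 n * / 2)). intro; reflexivity.
    apply (CV_mult _ (fun _ => / 2)). auto. apply cv_const.
Qed.

Lemma jj_nonneg j : 0 <= INR j * (INR j - 1).
Proof. destruct j. simpl; lra. rewrite S_INR. assert (0 <= INR j) by apply pos_INR. nra. Qed.

Theorem theorem2
  (p q : nat -> nat -> R) (pX : nat -> nat -> R)
  (rho g2 m1 m2 : nat -> R) (lambda : R)
  (Hp : forall n, (1 <= n)%nat -> is_pmf (p n))
  (Hq : forall n, (1 <= n)%nat -> is_pmf (q n))
  (HX0 : pX 0%nat = delta0)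
  (HXS : forall n k, (1 <= n)%nat ->
      infinite_sum (fun i => pX (n - 1)%nat i * conv (convpow (p n) i) (q n) k)
                   (pX n k))
  (Hrho : forall n, (1 <= n)%nat ->
      infinite_sum (fun j => INR j * p n j) (rho n))
  (Hg2 : forall n, (1 <= n)%nat ->
      infinite_sum (fun j => INR j * (INR j - 1) * p n j) (g2 n))
  (Hm1 : forall n, (1 <= n)%nat ->
      infinite_sum (fun j => INR j * q n j) (m1 n))
  (Hm2 : forall n, (1 <= n)%nat ->
      infinite_sum (fun j => INR j * (INR j - 1) * q n j) (m2 n))
  (Hi1 : forall n, (1 <= n)%nat -> rho n < 1)
  (Hi2 : Un_cv rho 1)
  (Hi3 : cv_infty (fun N => sum_f_R0 (fun n => 1 - rho (S n)) N))
  (Hi4 : Un_cv (fun n => g2 (S n) / (1 - rho (S n))) 0)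
  (Hii1 : Un_cv (fun n => m1 (S n) / (1 - rho (S n))) lambda)
  (Hii2 : Un_cv (fun n => m2 (S n) / (1 - rho (S n))) 0) :
  forall k : nat,
    Un_cv (fun n => sum_f_R0 (pX n) k) (sum_f_R0 (poisson_pmf lambda) k).
Proof.
  assert (Hp' : forall n, pmf' (p (S n))) by (intro; apply pmf_of; apply Hp; lia).
  assert (Hq' : forall n, pmf' (q (S n))) by (intro; apply pmf_of; apply Hq; lia).
  assert (HXS' : forall n k, is_series (fun i => pX n i * conv (convpow (p (S n)) i) (q (S n)) k)
                   (pX (S n) k)).
  { intros n k. apply is_series_Reals. assert (H := HXS (S n) k ltac:(lia)).
    replace (S n - 1)%nat with n in H by lia. exact H. }
  assert (Hpmf : forall n, pmf' (pX n)).
  { induction n.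
    - rewrite HX0. split. apply delta0_nonneg.
      eapply ser_ext; [|exact (delta0_ser 1)]. intro; simpl; rewrite pow1; ring.
    - exact (proj1 (recstep _ _ _ _ IHn (Hp' n) (Hq' n) (HXS' n))). }
  assert (HrecF : forall n s, 0 <= s <= 1 ->
      pgf (pX (S n)) s = pgf (pX n) (pgf (p (S n)) s) * pgf (q (S n)) s).
  { intros n. exact (proj2 (recstep _ _ _ _ (Hpmf n) (Hp' n) (Hq' n) (HXS' n))). }
  assert (Hrho' : forall n, is_series (fun j => INR j * p (S n) j) (rho (S n)))
    by (intro; apply is_series_Reals; apply Hrho; lia).
  assert (Hg2' : forall n, is_series (fun j => INR j * (INR j - 1) * p (S n) j) (g2 (S n)))
    by (intro; apply is_series_Reals; apply Hg2; lia).
  assert (Hm1' : forall n, is_series (fun j => INR j * q (S n) j) (m1 (S n)))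
    by (intro; apply is_series_Reals; apply Hm1; lia).
  assert (Hm2' : forall n, is_series (fun j => INR j * (INR j - 1) * q (S n) j) (m2 (S n)))
    by (intro; apply is_series_Reals; apply Hm2; lia).
  assert (Hrho0 : forall n, 0 <= rho (S n)).
  { intro n. eapply ser_nonneg; [|exact (Hrho' n)]. intro j. apply Rmult_le_pos.
    apply pos_INR. apply (Hp' n). }
  assert (Hg20 : forall n, 0 <= g2 (S n)).
  { intro n. eapply ser_nonneg; [|exact (Hg2' n)]. intro j. apply Rmult_le_pos.
    apply jj_nonneg. apply (Hp' n). }
  assert (Hm10 : forall n, 0 <= m1 (S n)).
  { intro n. eapply ser_nonneg; [|exact (Hm1' n)]. intro j. apply Rmult_le_pos.
    apply pos_INR. apply (Hq' n). }
  assert (Hm20 : forall n, 0 <= m2 (S n)).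
  { intro n. eapply ser_nonneg; [|exact (Hm2' n)]. intro j. apply Rmult_le_pos.
    apply jj_nonneg. apply (Hq' n). }
  assert (Hr1 : forall n, rho (S n) < 1) by (intro; apply Hi1; lia).
  assert (Hlam : 0 <= lambda).
  { destruct (Rle_or_lt 0 lambda) as [H|H]; auto.
    destruct (Hii1 (- lambda) ltac:(lra)) as [N HN].
    specialize (HN N (le_n N)). unfold Rdist in HN.
    assert (0 <= m1 (S N) / (1 - rho (S N))).
    { apply Rmult_le_pos. apply Hm10. left. apply Rinv_0_lt_compat. specialize (Hr1 N). lra. }
    rewrite Rabs_pos_eq in HN by lra. lra. }
  set (Bn := fun n => Bnd lambda (rho n) (m1 n) (m2 n) (g2 n)).
  set (D := Dseq rho Bn lambda).
  assert (HB0 : forall n, 0 <= Bn (S n)).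
  { intro n. apply Bnd_nonneg; auto. }
  assert (HD0 : forall n, 0 <= D n).
  { intro n. apply Dseq_nonneg; auto. }
  assert (HDcv : Un_cv D 0).
  { apply Dseq_cv; auto.
    apply (Bnd_cv lambda (fun n => rho (S n)) (fun n => g2 (S n)) (fun n => m1 (S n)) (fun n => m2 (S n)));
      auto.
    apply cv_shift; auto. }
  assert (Claim : forall n s, 0 <= s <= 1 ->
     Rabs (pgf (pX n) s - exp (- lambda * (1 - s))) <= D n * (1 - s)).
  { induction n; intros s Hs.
    - assert (H1 : pgf (pX 0%nat) s = 1).
      { apply (ser_uniq (fun j => pX 0%nat j * s ^ j)). apply pgf_is; auto.
        rewrite HX0. apply delta0_ser. }
      rewrite H1. change (D 0%nat) with lambda.
      assert (exp (- lambda * (1 - s)) <= 1).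
      { assert (0 <= lambda * (1 - s)) by (apply Rmult_le_pos; lra). apply Rle_trans with (exp 0); [apply exp_mono; lra | rewrite exp_0; lra]. }
      assert (H2 := exp_ineq1_le (- lambda * (1 - s))).
      rewrite Rabs_pos_eq by lra. lra.
    - rewrite HrecF by auto.
      set (t := pgf (p (S n)) s). set (h := pgf (q (S n)) s).
      assert (Ht : 0 <= t <= 1) by (apply pgf_bnd; auto).
      assert (Hh : 0 <= h <= 1) by (apply pgf_bnd; auto).
      assert (Mt := moment _ s _ _ (Hp' n) Hs (Hrho' n) (Hg2' n)). fold t in Mt.
      assert (Mh := moment _ s _ _ (Hq' n) Hs (Hm1' n) (Hm2' n)). fold h in Mh.
      assert (IH := IHn t Ht).
      assert (Hest := est lambda (rho (S n)) (m1 (S n)) (m2 (S n)) (g2 (S n)) (1 - s) t h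
          Hlam (conj (Hrho0 n) (Hr1 n)) (Hm10 n) (Hm20 n) (Hg20 n) ltac:(lra) Mt Mh Hh).
      change (D (S n)) with (rho (S n) * D n + Bn (S n)).
      fold (Bn (S n)) in Hest.
      replace (pgf (pX n) t * h - exp (- lambda * (1 - s))) with
        ((pgf (pX n) t - exp (- lambda * (1 - t))) * h + (exp (- lambda * (1 - t)) * h - exp (- lambda * (1 - s)))) by ring.
      eapply Rle_trans. apply Rabs_triang.
      rewrite Rabs_mult, (Rabs_pos_eq h) by lra.
      assert (HDn := HD0 n).
      assert (1 - t <= rho (S n) * (1 - s)) by lra.
      assert (Rabs (pgf (pX n) t - exp (- lambda * (1 - t))) * h <= D n * (1 - t)).
      { assert (0 <= Rabs (pgf (pX n) t - exp (- lambda * (1 - t)))) by apply Rabs_pos. nra. }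
      assert (D n * (1 - t) <= D n * (rho (S n) * (1 - s))) by (apply Rmult_le_compat_l; lra).
      nra. }
  assert (Hcoef := coef_cv pX (poisson_pmf lambda) (fun n s => pgf (pX n) s)
     (fun s => exp (- lambda * (1 - s))) Hpmf (poisson_pmf' lambda Hlam)
     (fun n s Hs => pgf_is (pX n) s (Hpmf n) Hs) (fun s Hs => poisson_ser lambda s Hlam)).
  assert (Hcv : forall k, Un_cv (fun n => pX n k) (poisson_pmf lambda k)).
  { apply Hcoef. intros s Hs eps Heps.
    destruct (HDcv eps Heps) as [N HN]. exists N. intros n Hn.
    specialize (HN n Hn). unfold Rdist in *. rewrite Rminus_0_r, Rabs_pos_eq in HN by apply HD0.
    assert (H := Claim n s ltac:(lra)). assert (HDn := HD0 n).
    assert (D n * (1 - s) <= D n) by nra. lra. }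
  intro k.
  apply (cv_ext (fun n => lsum (pX n) (S k))). intro n; rewrite lsum_sum; auto.
  rewrite lsum_sum. apply (lsum_cv pX). intros; apply Hcv.
Qed.
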